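(* Let $K$ be a field of characteristic $p>3$, let $n\ge1$, let $O_n=K[x_1,\dots,x_n]/(x_1^p,\dots,x_n^p)$, let $W_n=\operatorname{Der}(O_n)$, let $D$ be a Lie subalgebra of $W_n$ such that $O_n$ has no $D$-invariant ideals other than $0$ and $O_n$, and let $S$ be a finite-dimensional simple Lie algebra over $K$. Consider the Lie algebra $(S\otimes O_n)\oplus D$ with brackets $[x\otimes f,y\otimes g]=[x,y]\otimes fg$, $[d,x\otimes f]=x\otimes d(f)$, and the bracket of $D$, for $x,y\in S$, $f,g\in O_n$, $d\in D$. Then $Z^2_{comm}((S\otimes O_n)\oplus D)\cong Z^2_{comm}(D)$.
   Context: For a Lie algebra $\mathfrak L$ over $K$, $Z^2_{comm}(\mathfrak L)$ denotes the vector space of commutative $2$-cocycles, i.e. symmetric bilinear forms $\varphi:\mathfrak L\times\mathfrak L\to K$ with $\varphi([x,y],z)+\varphi([z,x],y)+\varphi([y,z],x)=0$ for all $x,y,z\in\mathfrak L$. *)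

(* Defs.v *)
From HB Require Import structures.
From mathcomp Require Import all_boot all_order all_algebra.
Set Implicit Arguments. Unset Strict Implicit. Unset Printing Implicit Defensive.
Import GRing.Theory.
Local Open Scope ring_scope.

(* Monomials x_1^{a_1}...x_n^{a_n} with 0 <= a_i < p : exponent vectors. *)
Definition mon (n p : nat) := {ffun 'I_n -> 'I_p}.

(* O_n = K[x_1..x_n]/(x_1^p..x_n^p), as coefficient functions on monomials. *)
Definition On (K : fieldType) (n p : nat) := {ffun mon n p -> K^o}.

Section Defs.
Variables (K : fieldType) (n p : nat).
Local Notation O := (On K n p).
Local Notation M := (mon n p).

(* a + b = m componentwise (as natural numbers); x^a x^b = x^(a+b) if all
   exponents stay < p, and 0 otherwise (since x_i^p = 0). *)
Definition addmon (a b m : M) : bool := [forall i, ((a i : nat) + b i == m i)%N].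

Definition omul (f g : O) : O :=
  [ffun m => \sum_(a : M) \sum_(b : M | addmon a b m) f a * g b].

Definition xmon (a : M) : O := [ffun m => (m == a)%:R].

(* d is a derivation of O_n (d is K-linear since d : 'End(O)). *)
Definition is_derivation (d : 'End(O)) : Prop :=
  forall f g : O, d (omul f g) = omul (d f) g + omul f (d g).

Definition is_ideal (I : {vspace O}) : Prop :=
  forall f g : O, g \in I -> omul f g \in I.

Definition D_simple (D : {vspace 'End(O)}) : Prop :=
  forall I : {vspace O}, is_ideal I ->
    (forall d : 'End(O), d \in D -> forall g : O, g \in I -> d g \in I) ->
    I = 0%VS \/ I = fullv.

Definition Dbr (D : {vspace 'End(O)}) (d e : subvs_of D) : subvs_of D :=
  vsproj D ((vsval d \o vsval e)%VF - (vsval e \o vsval d)%VF).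

(* Elements of S (x) O_n are written sum_a u(a) (x) x^a, i.e. functions u : M -> S. *)
Definition cur_br (S : vectType K) (brS : S -> S -> S) (u v : {ffun M -> S})
  : {ffun M -> S} :=
  [ffun m => \sum_(a : M) \sum_(b : M | addmon a b m) brS (u a) (v b)].

Definition der_act (S : vectType K) (d : 'End(O)) (u : {ffun M -> S})
  : {ffun M -> S} :=
  [ffun m => \sum_(a : M) (d (xmon a)) m *: u a].

Definition Ltype (S : vectType K) (D : {vspace 'End(O)}) :=
  ({ffun M -> S} * subvs_of D)%type.

Definition Lbr (S : vectType K) (brS : S -> S -> S) (D : {vspace 'End(O)})
  (x y : Ltype S D) : Ltype S D :=
  (cur_br brS x.1 y.1 + der_act (vsval x.2) y.1 - der_act (vsval y.2) x.1,
   Dbr x.2 y.2).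

End Defs.

Section Lie.
Variable K : fieldType.

Definition is_lie_bracket (V : lmodType K) (br : V -> V -> V) : Prop :=
  [/\ forall (a : K) x y z, br (a *: x + y) z = a *: br x z + br y z,
      forall (a : K) x y z, br z (a *: x + y) = a *: br z x + br z y,
      forall x, br x x = 0 &
      forall x y z, br x (br y z) + br y (br z x) + br z (br x y) = 0].

Definition is_lie_ideal (V : vectType K) (br : V -> V -> V) (I : {vspace V}) : Prop :=
  forall x y : V, y \in I -> br x y \in I.

Definition simple_lie (V : vectType K) (br : V -> V -> V) : Prop :=
  [/\ is_lie_bracket br,
      exists x y : V, br x y != 0 &
      forall I : {vspace V}, is_lie_ideal br I -> I = 0%VS \/ I = fullv].

Definition Z2comm (V : lmodType K) (br : V -> V -> V) (phi : V -> V -> K) : Prop :=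
  [/\ forall (a : K) x y z, phi (a *: x + y) z = a * phi x z + phi y z,
      forall (a : K) x y z, phi z (a *: x + y) = a * phi z x + phi z y,
      forall x y, phi x y = phi y x &
      forall x y z, phi (br x y) z + phi (br z x) y + phi (br y z) x = 0].

Definition iso_form_spaces (V W : lmodType K)
  (A : (V -> V -> K) -> Prop) (B : (W -> W -> K) -> Prop) : Prop :=
  exists (T : (V -> V -> K) -> (W -> W -> K)) (T' : (W -> W -> K) -> (V -> V -> K)),
    [/\ forall phi, A phi -> B (T phi),
        forall psi, B psi -> A (T' psi),
        forall (a : K) phi1 phi2, A phi1 -> A phi2 ->
          T (fun x y => a * phi1 x y + phi2 x y) = (fun x y => a * T phi1 x y + T phi2 x y),
        forall phi, A phi -> T' (T phi) = phi &
        forall psi, B psi -> T (T' psi) = psi].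

End Lie.

(* Main.v *)
Require Import Defs.
From HB Require Import structures.
From mathcomp Require Import all_boot all_order all_algebra.
From mathcomp Require Import ring.
From Stdlib Require Import FunctionalExtensionality.
Import GRing.Theory.
Local Open Scope ring_scope.
Set Implicit Arguments. Unset Strict Implicit. Unset Printing Implicit Defensive.

Section OAlg.
Variables (K : fieldType) (n p : nat).
Local Notation O := (On K n p).
Local Notation M := (mon n p).

Lemma ffZ (a : K) (f : O) m : (a *: f) m = a * f m.
Proof. by rewrite !ffunE. Qed.
Lemma ffD (f g : O) m : (f + g) m = f m + g m.
Proof. by rewrite !ffunE. Qed.
Lemma ffN (f : O) m : (- f) m = - f m.
Proof. by rewrite !ffunE. Qed.
Lemma ff0 m : (0 : O) m = 0.
Proof. by rewrite !ffunE. Qed.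

Lemma omulE (f g : O) m :
  omul f g m = \sum_(a : M) \sum_(b : M | addmon a b m) f a * g b.
Proof. by rewrite ffunE. Qed.

Lemma addmonC (a b m : M) : addmon a b m = addmon b a m.
Proof. by apply/eq_forallb => i; rewrite addnC. Qed.

Lemma omulC (f g : O) : omul f g = omul g f.
Proof.
apply/ffunP => m; rewrite !omulE.
rewrite (eq_bigr (fun a => \sum_b (if addmon a b m then f a * g b else 0)));
  last by move=> a _; rewrite big_mkcond.
rewrite exchange_big /=. apply: eq_bigr => b _; rewrite [RHS]big_mkcond /=.
by apply: eq_bigr => a _; rewrite addmonC mulrC.
Qed.

Lemma omul_linl (a : K) (f g h : O) :
  omul (a *: f + g) h = a *: omul f h + omul g h.
Proof.
apply/ffunP => m; rewrite ffD ffZ !omulE mulr_sumr -big_split /=.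
apply: eq_bigr => x _; rewrite mulr_sumr -big_split /=.
by apply: eq_bigr => y _; rewrite ffD ffZ mulrDl mulrA.
Qed.

Lemma omul_linr (a : K) (f g h : O) :
  omul h (a *: f + g) = a *: omul h f + omul h g.
Proof. by rewrite !(omulC h) omul_linl. Qed.

Lemma sum_uniq (P : pred M) (F : K) :
  (forall a a', P a -> P a' -> a = a') ->
  \sum_(a : M) (if P a then F else 0) = if [exists a, P a] then F else 0.
Proof.
move=> U; case: existsP => [[a0 Pa0]|nP].
  rewrite (bigD1 a0) //= Pa0 big1 ?addr0 // => a neq.
  by case: ifP => // Pa; rewrite (U _ _ Pa Pa0) eqxx in neq.
by rewrite big1 // => a _; case: ifP => // Pa; case: nP; exists a.
Qed.

Definition addmon3 (c e b m : M) : bool :=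
  [forall i, ((c i : nat) + e i + b i == m i)%N].

Lemma addmon_uniq (c e a a' : M) : addmon c e a -> addmon c e a' -> a = a'.
Proof.
move=> /forallP H /forallP H'; apply/ffunP => i; apply: ord_inj.
by move/eqP: (H i) => <-; move/eqP: (H' i) => <-.
Qed.

Lemma ex_addmonL (c e b m : M) :
  [exists a, addmon c e a && addmon a b m] = addmon3 c e b m.
Proof.
apply/existsP/forallP.
  case=> a /andP[/forallP H1 /forallP H2] i.
  by move: (H1 i) (H2 i) => /eqP -> .
move=> H.
have lt i : (c i + e i < p)%N.
  move: (H i) => /eqP E; apply: (leq_ltn_trans _ (ltn_ord (m i))).
  by rewrite -E leq_addr.
exists [ffun i => Ordinal (lt i)]; apply/andP; split; apply/forallP => i;
  rewrite ffunE //=.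
Qed.

Lemma ex_addmonR (c e b m : M) :
  [exists x, addmon e b x && addmon c x m] = addmon3 c e b m.
Proof.
apply/existsP/forallP.
  case=> a /andP[/forallP H1 /forallP H2] i.
  by move: (H1 i) (H2 i) => /eqP E /eqP <-; rewrite -E addnA.
move=> H.
have lt i : (e i + b i < p)%N.
  move: (H i) => /eqP E; apply: (leq_ltn_trans _ (ltn_ord (m i))).
  by rewrite -E -addnA leq_addl.
exists [ffun i => Ordinal (lt i)]; apply/andP; split; apply/forallP => i;
  rewrite ffunE //= ?addnA //.
Qed.


Lemma omulA (f g h : O) : omul (omul f g) h = omul f (omul g h).
Proof.
apply/ffunP => m; rewrite !omulE.
transitivity (\sum_(c : M) \sum_(e : M) \sum_(b : M)
   (if addmon3 c e b m then f c * g e * h b else 0)).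
  rewrite (eq_bigr (fun a => \sum_b \sum_c \sum_e
     (if addmon c e a && addmon a b m then f c * g e * h b else 0))); last first.
    move=> a _; rewrite big_mkcond; apply: eq_bigr => b _.
    rewrite omulE mulr_suml; case: ifP => Hab.
      apply: eq_bigr => c _; rewrite big_mkcond mulr_suml; apply: eq_bigr => e _.
      by rewrite andbT; case: ifP => //; rewrite mul0r.
    by rewrite big1 // => c _; rewrite big1 // => e _; rewrite andbF.
  rewrite exchange_big /= (eq_bigr (fun b => \sum_c \sum_e \sum_a
     (if addmon c e a && addmon a b m then f c * g e * h b else 0))); last first.
    move=> b _; rewrite exchange_big; apply: eq_bigr => c _.
    by rewrite exchange_big.
  rewrite exchange_big; apply: eq_bigr => c _; rewrite exchange_big.
  apply: eq_bigr => e _; apply: eq_bigr => b _.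
  rewrite sum_uniq ?ex_addmonL // => a a' /andP[Ha _] /andP[Ha' _].
  exact: addmon_uniq Ha Ha'.
symmetry.
rewrite (eq_bigr (fun c => \sum_e \sum_b \sum_x
     (if addmon e b x && addmon c x m then f c * g e * h b else 0))); last first.
  move=> c _; rewrite big_mkcond /= (eq_bigr (fun x => \sum_e \sum_b
     (if addmon e b x && addmon c x m then f c * g e * h b else 0))); last first.
    move=> x _; case: ifP => Hcx.
      rewrite omulE mulr_sumr; apply: eq_bigr => e _.
      rewrite big_mkcond mulr_sumr; apply: eq_bigr => b _.
      by rewrite andbT; case: ifP => _; rewrite ?mulrA ?mulr0.
    by rewrite big1 // => e _; rewrite big1 // => b _; rewrite andbF.
  rewrite exchange_big; apply: eq_bigr => e _; rewrite exchange_big //.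
apply: eq_bigr => c _; apply: eq_bigr => e _; apply: eq_bigr => b _.
rewrite sum_uniq ?ex_addmonR // => a a' /andP[Ha _] /andP[Ha' _].
exact: addmon_uniq Ha Ha'.
Qed.


Lemma decompO (f : O) : f = \sum_(a : M) f a *: xmon K a.
Proof.
apply/ffunP => m; rewrite sum_ffunE (bigD1 m) //= big1 ?addr0.
  by rewrite ffZ ffunE eqxx mulr1.
by move=> a /negbTE H; rewrite ffZ ffunE eq_sym H mulr0.
Qed.

Variable (p0 : (0 < p)%N).
Definition mz : M := [ffun _ => Ordinal p0].
Definition one : O := xmon K mz.

Lemma addmon_mzl (b m : M) : addmon mz b m = (b == m).
Proof.
apply/forallP/eqP => [H|->] ; last by move=> i; rewrite ffunE.
apply/ffunP => i; apply: ord_inj; move/eqP: (H i); by rewrite ffunE.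
Qed.

Lemma omul1 (f : O) : omul one f = f.
Proof.
apply/ffunP => m; rewrite omulE (bigD1 mz) //= [X in _ + X]big1 ?addr0; last first.
  by move=> a /negbTE H; rewrite big1 // => b _; rewrite ffunE H mul0r.
rewrite (bigD1 m) ?addmon_mzl //= [X in _ + X]big1 ?addr0 ?ffunE ?eqxx ?mul1r //.
by move=> b /andP[]; rewrite addmon_mzl => ->.
Qed.

Lemma omul1r (f : O) : omul f one = f.
Proof. by rewrite omulC omul1. Qed.

Lemma addmon_mz (a b : M) : addmon a b mz = (a == mz) && (b == mz).
Proof.
apply/forallP/andP => [H|[/eqP -> /eqP ->] i]; last by rewrite !ffunE.
split; apply/eqP/ffunP => i; apply: ord_inj; move/eqP: (H i); rewrite !ffunE /=;
  case: (a i : nat) => //; case: (b i : nat).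
Qed.

Lemma omul_mz (f g : O) : omul f g mz = f mz * g mz.
Proof.
rewrite omulE (bigD1 mz) //= [X in _ + X]big1 ?addr0; last first.
  by move=> a /negbTE H; rewrite big1 // => b; rewrite addmon_mz H.
rewrite (bigD1 mz) ?addmon_mz ?eqxx //= [X in _ + X]big1 ?addr0 //.
by move=> b /andP[]; rewrite addmon_mz eqxx /= => /eqP ->; rewrite eqxx.
Qed.

End OAlg.

Lemma self_add0 (V : zmodType) (x : V) : x = x + x -> x = 0.
Proof. by move=> H; apply: (addrI x); rewrite addr0 -H. Qed.

Section LieS.
Variables (K : fieldType) (S : vectType K) (brS : S -> S -> S).
Hypothesis HL : is_lie_bracket brS.

Lemma brlin_l a x y z : brS (a *: x + y) z = a *: brS x z + brS y z.
Proof. by case: HL. Qed.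
Lemma brlin_r a x y z : brS z (a *: x + y) = a *: brS z x + brS z y.
Proof. by case: HL. Qed.
Lemma br_alt x : brS x x = 0.
Proof. by case: HL. Qed.
Lemma br_jac x y z : brS x (brS y z) + brS y (brS z x) + brS z (brS x y) = 0.
Proof. by case: HL. Qed.

Lemma br0l z : brS 0 z = 0.
Proof.
by apply: self_add0; have := brlin_l 1 0 0 z; rewrite !scale1r addr0.
Qed.
Lemma br0r z : brS z 0 = 0.
Proof.
by apply: self_add0; have := brlin_r 1 0 0 z; rewrite !scale1r addr0.
Qed.
Lemma brDl x y z : brS (x + y) z = brS x z + brS y z.
Proof. by rewrite -(scale1r x) brlin_l !scale1r. Qed.
Lemma brDr x y z : brS z (x + y) = brS z x + brS z y.
Proof. by rewrite -(scale1r x) brlin_r !scale1r. Qed.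
Lemma brZl a x z : brS (a *: x) z = a *: brS x z.
Proof. by rewrite -(addr0 (a *: x)) brlin_l br0l addr0. Qed.
Lemma brZr a x z : brS z (a *: x) = a *: brS z x.
Proof. by rewrite -(addr0 (a *: x)) brlin_r br0r addr0. Qed.
Lemma brNl x z : brS (- x) z = - brS x z.
Proof. by rewrite -scaleN1r brZl scaleN1r. Qed.
Lemma brNr x z : brS z (- x) = - brS z x.
Proof. by rewrite -scaleN1r brZr scaleN1r. Qed.
Lemma br_suml I (r : seq I) (P : pred I) (F : I -> S) z :
  brS (\sum_(i <- r | P i) F i) z = \sum_(i <- r | P i) brS (F i) z.
Proof. by elim/big_rec2: _ => [|i x y _ <-]; rewrite ?br0l ?brDl. Qed.
Lemma br_sumr I (r : seq I) (P : pred I) (F : I -> S) z :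
  brS z (\sum_(i <- r | P i) F i) = \sum_(i <- r | P i) brS z (F i).
Proof. by elim/big_rec2: _ => [|i x y _ <-]; rewrite ?br0r ?brDr. Qed.

Lemma br_anti x y : brS y x = - brS x y.
Proof.
have := br_alt (x + y); rewrite brDl !brDr !br_alt add0r addr0 => /eqP.
by rewrite addr_eq0 => /eqP ->; rewrite opprK.
Qed.

Lemma br_jac2 x y z : brS x (brS y z) - brS y (brS x z) = brS (brS x y) z.
Proof.
have := br_jac x y z; rewrite (br_anti (brS x y)) (br_anti z x) brNr => /eqP.
by rewrite subr_eq0 opprK => /eqP.
Qed.

Lemma br_jac3 x y z :
  brS (brS x y) z + brS (brS y z) x + brS (brS z x) y = 0.
Proof.
rewrite (br_anti z) (br_anti x (brS y z)) (br_anti y (brS z x)) -!opprD.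
by apply/eqP; rewrite oppr_eq0 -addrA addrC; apply/eqP; exact: br_jac.
Qed.

Definition flin (c : S -> K) := forall a x y, c (a *: x + y) = a * c x + c y.

Lemma flin0 c : flin c -> c 0 = 0.
Proof.
by move=> H; apply: self_add0; have := H 1 0 0; rewrite !scale1r addr0 !mul1r.
Qed.
Lemma flinD c : flin c -> forall x y, c (x + y) = c x + c y.
Proof. by move=> H x y; rewrite -(scale1r x) H mul1r !scale1r. Qed.
Lemma flinZ c : flin c -> forall a x, c (a *: x) = a * c x.
Proof. by move=> H a x; rewrite -(addr0 (a *: x)) H flin0 // addr0. Qed.
Lemma flin_sum c : flin c -> forall I (r : seq I) (P : pred I) (F : I -> S),
  c (\sum_(i <- r | P i) F i) = \sum_(i <- r | P i) c (F i).
Proof. by move=> H I r P F; elim/big_rec2: _ => [|i x y _ <-]; rewrite ?flin0 ?flinD. Qed.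

End LieS.

Section Perf.
Variables (K : fieldType) (S : vectType K) (brS : S -> S -> S).
Hypothesis HS : simple_lie brS.

Lemma perf (c : S -> K) : flin c -> (forall s t, c (brS s t) = 0) ->
  forall x, c x = 0.
Proof.
move=> Hc Hb x.
case: HS => HL [x0 [y0 nz]] Hid.
pose e := vbasis (fullv : {vspace S}).
pose X := [seq brS u v | u <- (e : seq S), v <- (e : seq S)].
pose B := <<X>>%VS.
have brB : forall u v, brS u v \in B.
  move=> u v; rewrite (coord_vbasis (memvf u)) (coord_vbasis (memvf v)) br_suml //.
  apply: memv_suml => i _; rewrite brZl // br_sumr //; apply: memvZ.
  apply: memv_suml => j _; rewrite brZr //; apply: memvZ; apply: memv_span.
  by apply: allpairs_f; rewrite mem_nth // size_tuple.
have HB : B = fullv.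
  have [HB0|//] := Hid B (fun u v _ => brB u v).
  by move: (brB x0 y0); rewrite HB0 memv0 (negbTE nz).
have xB : x \in <<in_tuple X>>%VS by have := memvf x; rewrite -HB.
rewrite (coord_span xB) flin_sum // big1 // => i _.
rewrite flinZ //.
have : (in_tuple X)`_i \in X by rewrite mem_nth // size_tuple.
by case/allpairsP => [[u v] [_ _ ->]]; rewrite Hb mulr0.
Qed.

End Perf.

Section Phi.
Variables (K : fieldType) (V : lmodType K) (br : V -> V -> V) (phi : V -> V -> K).
Hypothesis Z : Z2comm br phi.

Lemma philin_l a x y z : phi (a *: x + y) z = a * phi x z + phi y z.
Proof. by case: Z. Qed.
Lemma philin_r a x y z : phi z (a *: x + y) = a * phi z x + phi z y.
Proof. by case: Z. Qed.
Lemma phi_sym x y : phi x y = phi y x.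
Proof. by case: Z. Qed.
Lemma phi_coc x y z : phi (br x y) z + phi (br z x) y + phi (br y z) x = 0.
Proof. by case: Z. Qed.

Lemma phi0l z : phi 0 z = 0.
Proof. by apply: self_add0; have := philin_l 1 0 0 z; rewrite !scale1r addr0 !mul1r. Qed.
Lemma phi0r z : phi z 0 = 0.
Proof. by rewrite phi_sym phi0l. Qed.
Lemma phiDl x y z : phi (x + y) z = phi x z + phi y z.
Proof. by rewrite -(scale1r x) philin_l mul1r !scale1r. Qed.
Lemma phiDr x y z : phi z (x + y) = phi z x + phi z y.
Proof. by rewrite !(phi_sym z) phiDl. Qed.
Lemma phiZl a x z : phi (a *: x) z = a * phi x z.
Proof. by rewrite -(addr0 (a *: x)) philin_l phi0l addr0. Qed.
Lemma phiZr a x z : phi z (a *: x) = a * phi z x.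
Proof. by rewrite !(phi_sym z) phiZl. Qed.
Lemma phiNl x z : phi (- x) z = - phi x z.
Proof. by rewrite -scaleN1r phiZl mulN1r. Qed.
Lemma phiNr x z : phi z (- x) = - phi z x.
Proof. by rewrite -scaleN1r phiZr mulN1r. Qed.
Lemma phiBl x y z : phi (x - y) z = phi x z - phi y z.
Proof. by rewrite phiDl phiNl. Qed.
Lemma phiBr x y z : phi z (x - y) = phi z x - phi z y.
Proof. by rewrite phiDr phiNr. Qed.
Lemma phi_suml I (r : seq I) (P : pred I) (F : I -> V) z :
  phi (\sum_(i <- r | P i) F i) z = \sum_(i <- r | P i) phi (F i) z.
Proof. by elim/big_rec2: _ => [|i x y _ <-]; rewrite ?phi0l ?phiDl. Qed.
Lemma phi_sumr I (r : seq I) (P : pred I) (F : I -> V) z :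
  phi z (\sum_(i <- r | P i) F i) = \sum_(i <- r | P i) phi z (F i).
Proof. by elim/big_rec2: _ => [|i x y _ <-]; rewrite ?phi0r ?phiDr. Qed.

Variable X : V -> Prop.
Hypothesis Xbr : forall a b, X a -> X b -> X (br a b).
Hypothesis Xanti : forall a b, X a -> X b -> br b a = - br a b.
Hypothesis Xjac : forall a b c, X a -> X b -> X c ->
  br a (br b c) - br b (br a c) = br (br a b) c.
Hypothesis Xjac3 : forall a b c, X a -> X b -> X c ->
  br (br a b) c + br (br b c) a + br (br c a) b = 0.
Hypothesis two : (2%:R : K) != 0.

Lemma phiA a b w : X a -> X b -> X w ->
  phi (br a b) w = phi b (br a w) - phi a (br b w).
Proof.
move=> Xa Xb Xw; have := phi_coc a b w; rewrite (Xanti Xa Xw) phiNl => H.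
rewrite (phi_sym b) (phi_sym a).
have -> : phi (br a b) w = (phi (br a b) w - phi (br a w) b + phi (br b w) a)
   + phi (br a w) b - phi (br b w) a by ring.
by rewrite H add0r.
Qed.

Lemma star x y z w : X x -> X y -> X z -> X w ->
  phi z (br (br x y) w) + phi x (br (br y z) w) + phi y (br (br z x) w) = 0.
Proof.
move=> Xx Xy Xz Xw.
have jac := Xjac3 Xx Xy Xz.
have H0 := congr1 (phi^~ w) jac; rewrite /= !phiDl phi0l in H0.
rewrite (phiA (Xbr Xx Xy) Xz Xw) (phiA (Xbr Xy Xz) Xx Xw) (phiA (Xbr Xz Xx) Xy Xw) in H0.
rewrite (phiA Xx Xy (Xbr Xz Xw)) (phiA Xy Xz (Xbr Xx Xw)) (phiA Xz Xx (Xbr Xy Xw)) in H0.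
have j1 := congr1 (phi x) (Xjac Xy Xz Xw); rewrite phiBr in j1.
have j2 := congr1 (phi y) (Xjac Xz Xx Xw); rewrite phiBr in j2.
have j3 := congr1 (phi z) (Xjac Xx Xy Xw); rewrite phiBr in j3.
move: H0; rewrite -j1 -j2 -j3 => H0.
apply: (mulfI two); rewrite mulr0 -H0; ring.
Qed.

End Phi.

Section Cur.
Variables (K : fieldType) (n p : nat) (S : vectType K) (brS : S -> S -> S)
  (D : {vspace 'End(On K n p)}).
Hypothesis HL : is_lie_bracket brS.
Local Notation O := (On K n p).
Local Notation M := (mon n p).
Local Notation LT := (Ltype S D).
Local Notation Lb := (@Lbr K n p S brS D).

Definition tens (s : S) (f : O) : {ffun M -> S} := [ffun a => f a *: s].
Definition TT (s : S) (f : O) : LT := (tens s f, 0).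
Definition Dd (d : subvs_of D) : LT := (0, d).

Lemma pairLE (a : K) (u v : {ffun M -> S}) (d e : subvs_of D) :
  a *: ((u, d) : LT) + (v, e) = (a *: u + v, a *: d + e).
Proof. by []. Qed.

Lemma tens_linl a s t f : tens (a *: s + t) f = a *: tens s f + tens t f.
Proof.
apply/ffunP => m; rewrite !ffunE scalerDr !scalerA mulrC //.
Qed.

Lemma tens_linr a f g s : tens s (a *: f + g) = a *: tens s f + tens s g.
Proof. by apply/ffunP => m; rewrite !ffunE scalerDl scalerA. Qed.

Lemma TT_linl a s t f : TT (a *: s + t) f = a *: TT s f + TT t f.
Proof. by rewrite /TT pairLE tens_linl scaler0 addr0. Qed.
Lemma TT_linr a f g s : TT s (a *: f + g) = a *: TT s f + TT s g.
Proof. by rewrite /TT pairLE tens_linr scaler0 addr0. Qed.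

Lemma TT0l f : TT 0 f = 0.
Proof. by rewrite /TT; congr pair; apply/ffunP => m; rewrite !ffunE scaler0. Qed.
Lemma TT0r s : TT s 0 = 0.
Proof. by rewrite /TT; congr pair; apply/ffunP => m; rewrite !ffunE scale0r. Qed.

Lemma TTNl s f : TT (- s) f = - TT s f.
Proof.
by rewrite -scaleN1r -(addr0 (_ *: s)) TT_linl TT0l addr0 scaleN1r.
Qed.
Lemma TTNr s f : TT s (- f) = - TT s f.
Proof.
by rewrite -scaleN1r -(addr0 (_ *: f)) TT_linr TT0r addr0 scaleN1r.
Qed.

Lemma cur_brT s t f g :
  cur_br brS (tens s f) (tens t g) = tens (brS s t) (omul f g).
Proof.
apply/ffunP => m; rewrite !ffunE scaler_suml; apply: eq_bigr => a _.
rewrite scaler_suml; apply: eq_bigr => b _; rewrite !ffunE.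
by rewrite (brZl HL) (brZr HL) scalerA mulrC.
Qed.

Lemma cur_br0l (u : {ffun M -> S}) : cur_br brS 0 u = 0.
Proof.
apply/ffunP => m; rewrite !ffunE big1 // => a _; rewrite big1 // => b _.
by rewrite ffunE (br0l HL).
Qed.
Lemma cur_br0r (u : {ffun M -> S}) : cur_br brS u 0 = 0.
Proof.
apply/ffunP => m; rewrite !ffunE big1 // => a _; rewrite big1 // => b _.
by rewrite ffunE (br0r HL).
Qed.

Lemma der_act0 (u : {ffun M -> S}) : der_act (0 : 'End(O)) u = 0.
Proof.
apply/ffunP => m; rewrite !ffunE big1 // => a _.
by rewrite zero_lfunE ffunE scale0r.
Qed.
Lemma der_act0r (d : 'End(O)) : der_act d (0 : {ffun M -> S}) = 0.
Proof.
apply/ffunP => m; rewrite !ffunE big1 // => a _.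
by rewrite ffunE scaler0.
Qed.

Lemma lfun_decomp (d : 'End(O)) f : d f = \sum_(a : M) f a *: d (xmon K a).
Proof.
by rewrite {1}(decompO f) linear_sum; apply: eq_bigr => a _; rewrite linearZ.
Qed.

Lemma der_actT (d : 'End(O)) s f : der_act d (tens s f) = tens s (d f).
Proof.
apply/ffunP => m; rewrite !ffunE lfun_decomp sum_ffunE scaler_suml.
by apply: eq_bigr => a _; rewrite ffunE ffZ scalerA mulrC.
Qed.

Lemma Dbr0r (d : subvs_of D) : Dbr d 0 = 0.
Proof. by rewrite /Dbr linear0 comp_lfun0r comp_lfun0l subr0 linear0. Qed.
Lemma Dbr0l (d : subvs_of D) : Dbr 0 d = 0.
Proof. by rewrite /Dbr linear0 comp_lfun0r comp_lfun0l subr0 linear0. Qed.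

Lemma Lbr_TT s t f g : Lb (TT s f) (TT t g) = TT (brS s t) (omul f g).
Proof.
by rewrite /Lbr /= Dbr0r cur_brT ?linear0 !der_act0 subr0 addr0.
Qed.
Lemma Lbr_DT (d : subvs_of D) s f : Lb (Dd d) (TT s f) = TT s (vsval d f).
Proof.
by rewrite /Lbr /= Dbr0r cur_br0l der_actT ?linear0 der_act0 subr0 add0r.
Qed.
Lemma Lbr_TD (d : subvs_of D) s f : Lb (TT s f) (Dd d) = TT s (- vsval d f).
Proof.
rewrite /Lbr /= Dbr0l cur_br0r der_actT ?linear0 der_act0 add0r sub0r.
by rewrite /TT; congr pair; apply/ffunP => m; rewrite !ffunE scaleNr.
Qed.
Lemma Lbr_DD (d e : subvs_of D) : Lb (Dd d) (Dd e) = Dd (Dbr d e).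
Proof. by rewrite /Lbr /= cur_br0l !der_act0r subr0 addr0. Qed.

Lemma decompL (x : LT) : x = \sum_(a : M) TT (x.1 a) (xmon K a) + Dd x.2.
Proof.
case: x => u d /=.
have -> : \sum_(a : M) TT (u a) (xmon K a) = (\sum_(a : M) tens (u a) (xmon K a), 0).
  elim/big_rec2: _ => [//|a y1 y2 _ ->].
  by rewrite /TT; congr pair; rewrite addr0.
rewrite /Dd; congr pair; last by rewrite add0r.
rewrite addr0; apply/ffunP => m; rewrite sum_ffunE (bigD1 m) //= big1 ?addr0.
  by rewrite ffunE ffunE eqxx scale1r.
by move=> a /negbTE H; rewrite ffunE ffunE eq_sym H scale0r.
Qed.

End Cur.

Section OAlg2.
Variables (K : fieldType) (n p : nat).
Local Notation O := (On K n p).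

Lemma omul0l (h : O) : omul 0 h = 0.
Proof. by apply: self_add0; have := omul_linl 1 0 0 h; rewrite !scale1r addr0. Qed.
Lemma omul0r (h : O) : omul h 0 = 0.
Proof. by rewrite omulC omul0l. Qed.
Lemma omulDl (f g h : O) : omul (f + g) h = omul f h + omul g h.
Proof. by rewrite -(scale1r f) omul_linl !scale1r. Qed.
Lemma omulDr (f g h : O) : omul h (f + g) = omul h f + omul h g.
Proof. by rewrite !(omulC h) omulDl. Qed.
Lemma omulZl a (f h : O) : omul (a *: f) h = a *: omul f h.
Proof. by rewrite -(addr0 (a *: f)) omul_linl omul0l addr0. Qed.
Lemma omulZr a (f h : O) : omul h (a *: f) = a *: omul h f.
Proof. by rewrite !(omulC h) omulZl. Qed.
Lemma omulNl (f h : O) : omul (- f) h = - omul f h.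
Proof. by rewrite -scaleN1r omulZl scaleN1r. Qed.
Lemma omul_suml I (r : seq I) (P : pred I) (F : I -> O) h :
  omul (\sum_(i <- r | P i) F i) h = \sum_(i <- r | P i) omul (F i) h.
Proof. by elim/big_rec2: _ => [|i x y _ <-]; rewrite ?omul0l ?omulDl. Qed.
Lemma omul_sumr I (r : seq I) (P : pred I) (F : I -> O) h :
  omul h (\sum_(i <- r | P i) F i) = \sum_(i <- r | P i) omul h (F i).
Proof. by elim/big_rec2: _ => [|i x y _ <-]; rewrite ?omul0r ?omulDr. Qed.

End OAlg2.

Section Nontriv.
Variables (K : fieldType) (n p : nat) (D : {vspace 'End(On K n p)}).
Hypothesis p1 : (1 < p)%N.
Hypothesis n0 : (0 < n)%N.
Local Notation O := (On K n p).
Local Notation M := (mon n p).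
Let p0 : (0 < p)%N := ltnW p1.
Local Notation mz := (mz n p0).

Lemma D_nontriv : D_simple D -> (forall d f, d \in D -> d f = 0) -> False.
Proof.
move=> HD H0.
have [m memm] : exists m : {vspace O}, forall g : O, (g \in m) = (g mz == 0).
  pose X := map (@xmon K n p) [seq a <- enum M | a != mz].
  exists <<X>>%VS => g; apply/idP/idP => Hg.
    rewrite (coord_span (X := in_tuple X) Hg) sum_ffunE; apply/eqP.
    apply: big1 => i _; rewrite ffZ.
    have : (in_tuple X)`_i \in X by rewrite mem_nth // size_tuple.
    case/mapP => a; rewrite mem_filter => /andP[Ha _] ->.
    by rewrite ffunE eq_sym (negbTE Ha) mulr0.
  rewrite (decompO g); apply: memv_suml => a _.
  case: (eqVneq a mz) => [->|Ha]; first by rewrite (eqP Hg) scale0r mem0v.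
  apply: memvZ; apply: memv_span; apply: map_f.
  by rewrite mem_filter Ha mem_enum.
have Hid : is_ideal m.
  by move=> f g; rewrite !memm omul_mz => /eqP ->; rewrite mulr0.
have Hinv : forall d : 'End(O), d \in D -> forall g : O, g \in m -> d g \in m.
  by move=> d Hd g _; rewrite H0 // mem0v.
pose a1 : M := [ffun _ => Ordinal p1].
have a1mz : (mz == a1) = false.
  apply/eqP => /ffunP /(_ (Ordinal n0)); rewrite !ffunE => /(congr1 val) //.
case: (HD m Hid Hinv) => Hm.
  have : xmon K a1 \in m by rewrite memm ffunE a1mz.
  rewrite Hm memv0 => /eqP /ffunP /(_ a1); rewrite !ffunE eqxx => /eqP.
  by rewrite oner_eq0.
have : one K n p0 \in m by rewrite Hm memvf.
by rewrite memm ffunE eqxx oner_eq0.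
Qed.

End Nontriv.

Section Core.
Variables (K : fieldType) (n p : nat) (S : vectType K) (brS : S -> S -> S)
  (D : {vspace 'End(On K n p)}).
Hypothesis HS : simple_lie brS.
Hypothesis two : (2%:R : K) != 0.
Hypothesis p0 : (0 < p)%N.
Hypothesis Hder : forall d, d \in D -> is_derivation d.
Variable phi : Ltype S D -> Ltype S D -> K.
Hypothesis HZ : Z2comm (@Lbr K n p S brS D) phi.

Local Notation O := (On K n p).
Local Notation M := (mon n p).
Local Notation LT := (Ltype S D).
Local Notation Lb := (@Lbr K n p S brS D).
Local Notation T := (@TT K n p S D).
Local Notation Dd := (@Dd K n p S D).
Local Notation one := (one K n p0).

Lemma HL : is_lie_bracket brS.
Proof. by case: HS. Qed.

Lemma TTD s t f : T (s + t) f = T s f + T t f.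
Proof. by rewrite -(scale1r s) TT_linl !scale1r. Qed.
Lemma TTB s t f : T (s - t) f = T s f - T t f.
Proof. by rewrite TTD TTNl. Qed.

Definition XT (v : LT) := exists s f, v = T s f.

Lemma XT_br a b : XT a -> XT b -> XT (Lb a b).
Proof.
by move=> [s [f ->]] [t [g ->]]; exists (brS s t), (omul f g); rewrite Lbr_TT //; exact: HL.
Qed.

Lemma XT_anti a b : XT a -> XT b -> Lb b a = - Lb a b.
Proof.
move=> [s [f ->]] [t [g ->]]; rewrite !Lbr_TT; try exact: HL.
by rewrite omulC (br_anti HL) TTNl.
Qed.

Lemma XT_jac a b c : XT a -> XT b -> XT c ->
  Lb a (Lb b c) - Lb b (Lb a c) = Lb (Lb a b) c.
Proof.
move=> [s [f ->]] [t [g ->]] [u [h ->]]; rewrite !Lbr_TT; try exact: HL.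
have E1 : omul f (omul g h) = omul (omul f g) h by rewrite omulA.
have E2 : omul g (omul f h) = omul (omul f g) h by rewrite -omulA (omulC g f).
by rewrite E1 E2 -TTB (br_jac2 HL).
Qed.

Lemma XT_jac3 a b c : XT a -> XT b -> XT c ->
  Lb (Lb a b) c + Lb (Lb b c) a + Lb (Lb c a) b = 0.
Proof.
move=> [s [f ->]] [t [g ->]] [u [h ->]]; rewrite !Lbr_TT; try exact: HL.
have E1 : omul (omul g h) f = omul (omul f g) h by rewrite omulC omulA.
have E2 : omul (omul h f) g = omul (omul f g) h by rewrite omulA omulC.
rewrite E1 E2 -!TTD.
by rewrite (br_jac3 HL) TT0l.
Qed.


Lemma XTT s f : XT (T s f).
Proof. by exists s, f. Qed.

Lemma step1 s t u v g h :
  phi (T t g) (T (brS (brS u s) v) h) = phi (T t one) (T (brS (brS u s) v) (omul g h)).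
Proof.
have E := star HZ XT_br XT_anti XT_jac XT_jac3 two (XTT s one) (XTT t g) (XTT u one) (XTT v h).
have E' := star HZ XT_br XT_anti XT_jac XT_jac3 two (XTT s one) (XTT t one) (XTT u one) (XTT v (omul g h)).
rewrite !Lbr_TT ?omul1 ?omul1r ?omul1 in E E'; try exact: HL.
by move: E; rewrite -E' => /addrI.
Qed.


Lemma phiTT t w g h :
  phi (T t g) (T w h) = phi (T t one) (T w (omul g h)).
Proof.
pose c := fun w => phi (T t g) (T w h) - phi (T t one) (T w (omul g h)).
have fc : flin c.
  by move=> a x y; rewrite /c !TT_linl !(philin_r HZ); ring.
apply/eqP; rewrite -subr_eq0; apply/eqP; move: w; apply: (perf HS fc) => x v.
pose c1 := fun x => c (brS x v).
have fc1 : flin c1.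
  by move=> a y z; rewrite /c1 (brlin_l HL) fc.
move: x; apply: (perf HS fc1) => u s.
by rewrite /c1 /c step1 subrr.
Qed.

Definition beta k s t := phi (T s one) (T t k).

Lemma phiTT' s t f g : phi (T s f) (T t g) = beta (omul f g) s t.
Proof. exact: phiTT. Qed.

Lemma beta_sym k s t : beta k s t = beta k t s.
Proof. by rewrite /beta (phi_sym HZ) phiTT omulC omul1. Qed.

Lemma beta_lin a k k' s t : beta (a *: k + k') s t = a * beta k s t + beta k' s t.
Proof. by rewrite /beta TT_linr (philin_r HZ). Qed.

Lemma beta0 s t : beta 0 s t = 0.
Proof. by rewrite /beta TT0r (phi0r HZ). Qed.

Lemma betaD k k' s t : beta (k + k') s t = beta k s t + beta k' s t.
Proof. by rewrite -(scale1r k) beta_lin mul1r !scale1r. Qed.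

Lemma betaZ a k s t : beta (a *: k) s t = a * beta k s t.
Proof. by rewrite -(addr0 (a *: k)) beta_lin beta0 addr0. Qed.

Lemma betaN k s t : beta (- k) s t = - beta k s t.
Proof. by rewrite -scaleN1r betaZ mulN1r. Qed.

Lemma beta_sum I (r : seq I) (P : pred I) (F : I -> O) s t :
  beta (\sum_(i <- r | P i) F i) s t = \sum_(i <- r | P i) beta (F i) s t.
Proof. by elim/big_rec2: _ => [|i x y _ <-]; rewrite ?beta0 ?betaD. Qed.


Lemma lin_two (x y z : K) : x + y - z = 0 -> - x + y - z = 0 -> y = z /\ x = 0.
Proof.
move=> H1 H2; split.
  apply: (mulfI two); apply/eqP; rewrite -subr_eq0; apply/eqP.
  have -> : 2%:R * y - 2%:R * z = (x + y - z) + (- x + y - z) by ring.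
  by rewrite H1 H2 addr0.
apply: (mulfI two); rewrite mulr0.
have -> : 2%:R * x = (x + y - z) - (- x + y - z) by ring.
by rewrite H1 H2 subrr.
Qed.

Lemma step3 (d : subvs_of D) f g s t :
  beta (omul (vsval d f) g) s t = beta (omul (vsval d g) f) s t /\
  phi (T (brS s t) (omul f g)) (Dd d) = 0.
Proof.
have H1 := phi_coc HZ (T s f) (T t g) (Dd d).
have H2 := phi_coc HZ (T t f) (T s g) (Dd d).
have LTT := Lbr_TT D HL.
have LDT : forall d s f, Lb (Dd d) (T s f) = T s (vsval d f).
  by move=> *; apply: Lbr_DT; exact: HL.
have LTD : forall d s f, Lb (T s f) (Dd d) = T s (- vsval d f).
  by move=> *; apply: Lbr_TD; exact: HL.
rewrite LTT LDT LTD !phiTT' omulNl betaN (beta_sym _ t s) in H1.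
rewrite LTT LDT LTD !phiTT' omulNl betaN (beta_sym _ t s) in H2.
rewrite (br_anti HL) TTNl (phiNl HZ) in H2.
have [E1 E2] := lin_two H1 H2.
by split.
Qed.

Lemma dD_one (d : subvs_of D) : vsval d one = 0.
Proof.
apply: self_add0; have := Hder (subvsP d) one one.
by rewrite omul1 omul1 omul1r.
Qed.

Lemma beta_d (d : subvs_of D) k s t : beta (vsval d k) s t = 0.
Proof.
have [E _] := step3 d k one s t.
by rewrite omul1r dD_one omul0l beta0 in E.
Qed.

Lemma beta_dg (d : subvs_of D) f g s t : beta (omul (vsval d f) g) s t = 0.
Proof.
have := beta_d d (omul f g) s t; rewrite (Hder (subvsP d)) betaD (omulC f).
have [-> _] := step3 d g f s t => H.
apply: (mulfI two); rewrite mulr0 -H mulr_natl mulr2n.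
by have [-> _] := step3 d f g s t.
Qed.

Lemma phiTD s f (d : subvs_of D) : phi (T s f) (Dd d) = 0.
Proof.
pose c := fun s => phi (T s f) (Dd d).
have fc : flin c by move=> a x y; rewrite /c TT_linl (philin_l HZ).
move: s; apply: (perf HS fc) => s t.
by have [_ H] := step3 d f one s t; rewrite omul1r in H.
Qed.

Hypothesis HDs : D_simple D.
Hypothesis p1 : (1 < p)%N.
Hypothesis n0 : (0 < n)%N.

Definition gens : seq O :=
  [seq omul (dd (xmon K ab.1)) (xmon K ab.2) | dd : 'End(O) <- vbasis D,
     ab : M * M <- [seq (a, b) | a <- enum M, b <- enum M]].

Lemma gens_form x : x \in gens ->
  exists dd a b, dd \in D /\ x = omul (dd (xmon K a)) (xmon K b).
Proof.
case/allpairsP => [[dd [a b]] /= [Hdd _ ->]].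
by exists dd, a, b; split => //; exact: vbasis_mem.
Qed.

Lemma memJ dd f g : dd \in D -> omul (dd f) g \in <<gens>>%VS.
Proof.
move=> Hdd; rewrite (coord_vbasis Hdd) sum_lfunE omul_suml.
apply: memv_suml => i _; rewrite scale_lfunE omulZl; apply: memvZ.
rewrite lfun_decomp (decompO g) omul_suml; apply: memv_suml => a _.
rewrite omulZl; apply: memvZ; rewrite omul_sumr; apply: memv_suml => b _.
rewrite omulZr; apply: memvZ; apply: memv_span.
apply/allpairsP; exists ((vbasis D)`_i, (a, b)); split => //=.
  by rewrite mem_nth // size_tuple.
by apply/allpairsP; exists (a, b); rewrite !mem_enum.
Qed.


Lemma J_ideal : is_ideal <<gens>>%VS.
Proof.
move=> f g Hg; rewrite (coord_span (X := in_tuple gens) Hg) omul_sumr.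
apply: memv_suml => i _; rewrite omulZr; apply: memvZ.
have : (in_tuple gens)`_i \in gens by rewrite mem_nth // size_tuple.
case/gens_form => dd [a [b [Hdd ->]]].
by rewrite -omulA (omulC f) omulA; apply: memJ.
Qed.

Lemma J_inv d : d \in D -> forall g : O, g \in <<gens>>%VS -> d g \in <<gens>>%VS.
Proof.
move=> Hd g Hg; rewrite (coord_span (X := in_tuple gens) Hg) linear_sum.
apply: memv_suml => i _; rewrite linearZ; apply: memvZ.
have : (in_tuple gens)`_i \in gens by rewrite mem_nth // size_tuple.
case/gens_form => dd [a [b [Hdd ->]]].
change (d (omul (dd (xmon K a)) (xmon K b)) \in <<gens>>%VS).
rewrite (Hder Hd); apply: memvD; first exact: memJ.
by rewrite omulC; apply: memJ.
Qed.

Lemma beta_J k s t : k \in <<gens>>%VS -> beta k s t = 0.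
Proof.
move=> Hk; rewrite (coord_span (X := in_tuple gens) Hk) beta_sum.
apply: big1 => i _; rewrite betaZ.
have : (in_tuple gens)`_i \in gens by rewrite mem_nth // size_tuple.
case/gens_form => dd [a [b [Hdd ->]]].
by rewrite -(vsprojK Hdd) beta_dg mulr0.
Qed.

Lemma beta_all k s t : beta k s t = 0.
Proof.
case: (HDs J_ideal J_inv) => HJ.
  exfalso; apply: (D_nontriv p1 n0 HDs) => d f Hd.
  have : omul (d f) one \in <<gens>>%VS by exact: memJ.
  by rewrite HJ memv0 omul1r => /eqP.
by apply: beta_J; rewrite HJ memvf.
Qed.

Lemma phiT_all s f y : phi (T s f) y = 0.
Proof.
rewrite (decompL y) (phiDr HZ) (phi_sumr HZ) phiTD addr0 big1 // => a _.
by rewrite phiTT' beta_all.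
Qed.

Lemma phi_main x y : phi x y = phi (Dd x.2) (Dd y.2).
Proof.
have E : forall x y, phi x y = phi (Dd x.2) y.
  move=> u v; rewrite {1}(decompL u) (phiDl HZ) (phi_suml HZ) big1 ?add0r //.
  by move=> a _; rewrite phiT_all.
by rewrite E (phi_sym HZ) E (phi_sym HZ).
Qed.

End Core.


Theorem theorem6p1 (K : fieldType) (p n : nat) (S : vectType K)
  (brS : S -> S -> S) (D : {vspace 'End(On K n p)}) :
  p \in [pchar K] -> (3 < p)%N -> (0 < n)%N ->
  simple_lie brS ->
  (forall d, d \in D -> is_derivation d) ->
  (forall d e, d \in D -> e \in D -> ((d \o e)%VF - (e \o d)%VF) \in D) ->
  D_simple D ->
  iso_form_spaces (Z2comm (@Lbr K n p S brS D)) (Z2comm (@Dbr K n p D)).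
Proof.
move=> Hp Hp3 Hn HS Hder _ HDs.
have p1 : (1 < p)%N by apply: ltn_trans Hp3.
have p0 : (0 < p)%N by apply: ltnW.
have two : (2%:R : K) != 0.
  rewrite -(dvdn_pcharf Hp); apply/negP => /(dvdn_leq (isT : (0 < 2)%N)).
  by rewrite leqNgt (ltn_trans _ Hp3).
have HL : is_lie_bracket brS by case: HS.
exists (fun phi => fun d e => phi (Dd S d) (Dd S e)), (fun psi => fun x y => psi x.2 y.2).
split.
- move=> phi HZ; split.
  + move=> a x y z.
    have -> : Dd S (a *: x + y) = a *: Dd S x + Dd S y.
      by rewrite /Dd pairLE scaler0 addr0.
    exact: (philin_l HZ).
  + move=> a x y z.
    have -> : Dd S (a *: x + y) = a *: Dd S x + Dd S y.
      by rewrite /Dd pairLE scaler0 addr0.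
    exact: (philin_r HZ).
  + by move=> x y; exact: (phi_sym HZ).
  + by move=> x y z; rewrite -!(Lbr_DD HL); exact: (phi_coc HZ).
- move=> psi HZ; split.
  + by move=> a x y z; exact: (philin_l HZ).
  + by move=> a x y z; exact: (philin_r HZ).
  + by move=> x y; exact: (phi_sym HZ).
  + by move=> x y z; exact: (phi_coc HZ).
- by [].
- move=> phi HZ; apply: functional_extensionality => x.
  apply: functional_extensionality => y.
  by rewrite [RHS](phi_main HS two p0 Hder HZ HDs p1 Hn).
- move=> psi HZ; apply: functional_extensionality => d; apply: functional_extensionality => e; reflexivity.
Qed.
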